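(* Let $(M,d)$ be a metric space and let $F: M \to M$ be nonexpansive with respect to $d$. Let $u \in M$ be a fixed point of $F$ and let $(x^m)_{m\in\mathbb{N}}$ be a sequence in $M$ converging to $u$. Suppose there are constants $\eta, \theta \in (0,1)$, $c > 0$ and $R>0$ such that $$d(F^k(y), u) \le c\,\eta^k \quad\text{for all } y \text{ with } d(y,u)\le R \text{ and all } k\in\mathbb{N},$$ and $$d(F(x^m), x^{m+1}) \le c\,\theta^m \quad \text{for all } m \in \mathbb{N}.$$ Then $$\limsup_{k\to\infty} d(x^k, u)^{1/k} \le \eta^{\lambda} = \theta^{1-\lambda} < 1, \qquad \text{where } \lambda = \frac{\log\theta}{\log\eta + \log\theta}.$$
   Context: $F$ is nonexpansive with respect to $d$ if $d(F(x), F(y)) \le d(x,y)$ for all $x, y \in M$. *)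

(* Defs.v *)
From Stdlib Require Import Reals.
From Coquelicot Require Import Coquelicot.
Open Scope R_scope.

Definition is_metric {M : Type} (d : M -> M -> R) : Prop :=
  (forall x y, 0 <= d x y) /\
  (forall x y, d x y = 0 <-> x = y) /\
  (forall x y, d x y = d y x) /\
  (forall x y z, d x z <= d x y + d y z).

Definition nonexpansive {M : Type} (d : M -> M -> R) (F : M -> M) : Prop :=
  forall x y, d (F x) (F y) <= d x y.

Definition iterate {M : Type} (F : M -> M) (k : nat) : M -> M := Nat.iter k F.

(* Real power a^b for a >= 0, with the convention 0^b = 0 (b > 0 in all uses). *)
Definition rpow (a b : R) : R := if Rle_dec a 0 then 0 else Rpower a b.

(* Main.v *)
Require Import Defs.
From Stdlib Require Import Reals Lra Lia.
From Coquelicot Require Import Coquelicot.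
Open Scope R_scope.

Lemma exp_mono (a b : R) : a <= b -> exp a <= exp b.
Proof.
  intros H; destruct (Rle_lt_or_eq_dec _ _ H) as [H1|H1].
  - left; apply exp_increasing; exact H1.
  - subst; lra.
Qed.

Lemma tele (M : Type) (d : M -> M -> R) (F : M -> M) (x : nat -> M) (theta c : R) :
  is_metric d -> nonexpansive d F -> theta <> 1 ->
  (forall m, d (F (x m)) (x (S m)) <= c * theta ^ m) ->
  forall m k, d (iterate F k (x m)) (x (m + k)%nat) <= c * theta ^ m * (1 - theta ^ k) / (1 - theta).
Proof.
  intros [H0 [H1 [H2 H3]]] Hne Ht Hx m k.
  assert (Ht' : 1 - theta <> 0) by lra.
  induction k as [|k IH].
  - rewrite Nat.add_0_r. unfold iterate; simpl.
    assert (d (x m) (x m) = 0) by (apply H1; reflexivity).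
    rewrite H. replace (c * theta ^ m * (1 - 1) / (1 - theta)) with 0 by (field; auto). lra.
  - rewrite Nat.add_succ_r.
    change (iterate F (S k) (x m)) with (F (iterate F k (x m))).
    eapply Rle_trans. apply (H3 _ (F (x (m + k)%nat))).
    eapply Rle_trans. apply Rplus_le_compat. eapply Rle_trans. apply Hne. apply IH. apply Hx.
    rewrite pow_add. simpl. right. field. auto.
Qed.

Theorem mainTheorem12 (M : Type) (d : M -> M -> R) (F : M -> M) (u : M)
  (x : nat -> M) (eta theta c Rad : R) :
  is_metric d ->
  nonexpansive d F ->
  F u = u ->
  is_lim_seq (fun m => d (x m) u) 0 ->
  0 < eta < 1 -> 0 < theta < 1 -> 0 < c -> 0 < Rad ->
  (forall y k, d y u <= Rad -> d (iterate F k y) u <= c * eta ^ k) ->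
  (forall m, d (F (x m)) (x (S m)) <= c * theta ^ m) ->
  let lambda := ln theta / (ln eta + ln theta) in
  Rbar_le (LimSup_seq (fun k => rpow (d (x k) u) (/ INR k))) (Finite (Rpower eta lambda)) /\
  Rpower eta lambda = Rpower theta (1 - lambda) /\
  Rpower eta lambda < 1.
Proof.
  intros Hm Hne Hu Hlim He Ht Hc HR Hcontr Hx lambda.
  pose proof Hm as [H0 [H1 [H2 H3]]].
  assert (lne : ln eta < 0) by (rewrite <- ln_1; apply ln_increasing; lra).
  assert (lnt : ln theta < 0) by (rewrite <- ln_1; apply ln_increasing; lra).
  set (Sg := ln eta + ln theta).
  assert (HS : Sg < 0) by (unfold Sg; lra).
  set (L := lambda * ln eta).
  assert (E : (1 - lambda) * ln theta = L).
  { unfold L, lambda. field. unfold Sg in HS; lra. }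
  assert (Hlam : lambda * Sg = ln theta) by (unfold lambda, Sg; field; unfold Sg in HS; lra).
  assert (HrL : Rpower eta lambda = exp L) by (unfold Rpower, L; f_equal; ring).
  assert (HSdef : Sg = ln eta + ln theta) by reflexivity.
  assert (HLdef : L = lambda * ln eta) by reflexivity.
  clearbody L Sg lambda.
  assert (lampos : 0 < lambda) by nra.
  assert (Hlam1 : (1 - lambda) * Sg = ln eta) by nra.
  assert (lam1 : 0 < 1 - lambda) by nra.
  assert (HL : L < 0) by nra.
  split; [| split].
  2: { rewrite HrL. unfold Rpower. f_equal. rewrite <- E. ring. }
  2: { rewrite HrL. rewrite <- exp_0. apply exp_increasing. lra. }
  rewrite HrL.
  apply is_lim_seq_spec in Hlim.
  destruct (Hlim (mkposreal Rad HR)) as [N HN]. simpl in HN.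
  assert (Hb : forall m k, (N <= m)%nat ->
            d (x (m + k)%nat) u <= c * eta ^ k + c * theta ^ m / (1 - theta)).
  { intros m k Hmk.
    assert (Hd : d (x m) u <= Rad).
    { specialize (HN m Hmk). rewrite Rminus_0_r in HN.
      rewrite Rabs_pos_eq in HN by apply H0. lra. }
    eapply Rle_trans. apply (H3 _ (iterate F k (x m))).
    rewrite H2. rewrite Rplus_comm. apply Rplus_le_compat. apply Hcontr; auto.
    eapply Rle_trans. apply (tele M d F x theta c Hm Hne); auto; lra.
    assert (0 < theta ^ m) by (apply pow_lt; lra).
    assert (0 < theta ^ k) by (apply pow_lt; lra).
    unfold Rdiv. apply Rmult_le_compat_r. left; apply Rinv_0_lt_compat; lra.
    assert (0 < c * theta ^ m * theta ^ k) by (repeat apply Rmult_lt_0_compat; auto).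
    replace (c * theta ^ m * (1 - theta ^ k)) with (c * theta ^ m - c * theta ^ m * theta ^ k) by ring.
    lra. }
  set (K := c + c / (theta * (1 - theta))).
  assert (HK : 0 < K).
  { unfold K. assert (0 < c / (theta * (1 - theta))). apply Rdiv_lt_0_compat; nra. lra. }
  set (v := fun n : nat => exp (ln K * / INR n + L)).
  assert (Hv : is_lim_seq v (exp L)).
  { unfold v. apply is_lim_seq_continuous. apply derivable_continuous_pt, derivable_pt_exp.
    assert (Hq : is_lim_seq (fun n => ln K * / INR n + L) (ln K * 0 + L)).
    2: { rewrite Rmult_0_r, Rplus_0_l in Hq. exact Hq. }
    apply is_lim_seq_plus'. 2: apply is_lim_seq_const.
    assert (Hz : is_lim_seq (fun n => / INR n) (Rbar_inv p_infty)).
    { apply is_lim_seq_inv. apply is_lim_seq_INR. discriminate. }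
    apply (is_lim_seq_scal_l _ (ln K)) in Hz. simpl in Hz. exact Hz. }
  replace (Finite (exp L)) with (LimSup_seq v).
  2: { apply is_LimSup_seq_unique, is_lim_LimSup_seq, Hv. }
  apply LimSup_le.
  assert (Hq : 0 <= (INR N + 1) / (1 - lambda)).
  { apply Rdiv_le_0_compat. pose proof (pos_INR N). lra. lra. }
  destruct (nfloor_ex _ Hq) as [n0 [Hn0a Hn0b]].
  exists (Datatypes.S n0). intros n Hn.
  assert (HnR : INR (Datatypes.S n0) <= INR n) by (apply le_INR; auto).
  rewrite S_INR in HnR.
  assert (Hn1 : INR N + 1 < (1 - lambda) * INR n).
  { apply Rmult_lt_reg_l with (/ (1 - lambda)). apply Rinv_0_lt_compat; lra.
    rewrite <- Rmult_assoc, Rinv_l by lra. rewrite Rmult_1_l.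
    unfold Rdiv in Hn0b. lra. }
  assert (Hnpos : 0 < INR n) by (pose proof (pos_INR n0); lra).
  assert (Hr : 0 <= (1 - lambda) * INR n) by nra.
  destruct (nfloor_ex _ Hr) as [m [Hma Hmb]].
  assert (HNm : (N <= m)%nat).
  { assert (INR N < INR m) by lra. apply INR_lt in H. lia. }
  assert (Hmn : (m <= n)%nat).
  { assert (INR m <= INR n) by nra. apply INR_le in H. exact H. }
  destruct (Nat.le_exists_sub m n Hmn) as [k [Hk _]].
  replace n with (m + k)%nat in * by lia.
  rewrite plus_INR in *.
  assert (Hek : eta ^ k <= exp ((INR m + INR k) * L)).
  { rewrite <- Rpower_pow by lra. unfold Rpower. apply exp_mono.
    rewrite HLdef. assert (INR k >= lambda * (INR m + INR k)) by lra. nra. }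
  assert (Htm : theta ^ m <= exp ((INR m + INR k) * L) / theta).
  { rewrite <- Rpower_pow by lra. unfold Rpower.
    assert (H4 : INR m * ln theta <= ((1 - lambda) * (INR m + INR k) - 1) * ln theta) by nra.
    assert (H5 : ((1 - lambda) * (INR m + INR k) - 1) * ln theta
                 = (INR m + INR k) * L + - ln theta).
    { rewrite <- E. ring. }
    rewrite H5 in H4. eapply Rle_trans. apply exp_mono. exact H4.
    rewrite exp_plus, exp_Ropp, exp_ln by lra. right; reflexivity. }
  assert (Ha : d (x (m + k)%nat) u <= K * exp ((INR m + INR k) * L)).
  { eapply Rle_trans. apply Hb; auto.
    set (X := exp ((INR m + INR k) * L)) in *.
    assert (c * theta ^ m / (1 - theta) <= c * (X / theta) / (1 - theta)).
    { unfold Rdiv. apply Rmult_le_compat_r. left; apply Rinv_0_lt_compat; lra.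
      apply Rmult_le_compat_l; lra. }
    assert (c * eta ^ k <= c * X) by (apply Rmult_le_compat_l; lra).
    replace (K * X) with (c * X + c * (X / theta) / (1 - theta)).
    lra. unfold K. field. lra. }
  unfold rpow, v. destruct (Rle_dec (d (x (m + k)%nat) u) 0) as [Hle|Hgt].
  { left; apply exp_pos. }
  apply Rnot_le_lt in Hgt.
  unfold Rpower. apply exp_mono. rewrite plus_INR.
  assert (Hln : ln (d (x (m + k)%nat) u) <= ln K + (INR m + INR k) * L).
  { rewrite <- (ln_exp ((INR m + INR k) * L)). rewrite <- ln_mult by (auto; apply exp_pos).
    apply ln_le; auto. }
  replace (ln K * / (INR m + INR k) + L) with (/ (INR m + INR k) * (ln K + (INR m + INR k) * L))
    by (field; lra).
  apply Rmult_le_compat_l. left; apply Rinv_0_lt_compat; lra. exact Hln.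
Qed.
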